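(* Let $\mathcal M=(V,E,c_V,L,\Theta)$ be a molecular graph and $\mathcal C_{\mathcal M}$ its conformational space. Suppose $\varphi,\psi\in\mathcal C_{\mathcal M}$ and $(v,w_1,w_2,w_3)\in E_3$ satisfy $O_\varphi(v,w_1,w_2,w_3)=-O_\psi(v,w_1,w_2,w_3)\neq 0$. Then $\varphi$ and $\psi$ lie in different path components of $\mathcal C_{\mathcal M}$. In particular, if $\mathcal C_{\mathcal M}\neq\emptyset$ and $\mathcal M$ is not planar, then $\mathcal C_{\mathcal M}$ is not path connected.
   Context: A molecular graph is a tuple $\mathcal M=(V,E,c_V,L,\Theta)$ where: $V$ is a finite set; $E\subseteq V\times V$ satisfies $(v,v)\notin E$ and $(v,w)\in E\iff (w,v)\in E$; $c_V:V\to\mathbb N$ is arbitrary; $L:E\to(0,\infty)$ with $L(v,w)=L(w,v)$; and $\Theta:E_2\to(0,\pi]$ with $\Theta(v,w_1,w_2)=\Theta(v,w_2,w_1)$, where $E_2=\{(v,w_1,w_2)\in V^3: (v,w_1),(v,w_2)\in E,\ w_1\neq w_2\}$. The geometric realisation of $\mathcal M$ is the metric graph obtained by gluing a segment $[0,L(e)]$ for each edge $e$ along the vertices. A configuration (embedding) of $\mathcal M$ is an injective continuous map $\varphi$ from the geometric realisation into $\mathbb R^3$ such that (i) the restriction of $\varphi$ to each edge is an isometric embedding, and (ii) for each $(v,w_1,w_2)\in E_2$ the angle at $\varphi(v)$ between the segments to $\varphi(w_1)$ and $\varphi(w_2)$ equals $\Theta(v,w_1,w_2)$. Such $\varphi$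 is determined by $(\varphi(v_1),\dots,\varphi(v_n))\in\mathbb R^{3n}$ where $V=\{v_1,\dots,v_n\}$; the conformational space $\mathcal C_{\mathcal M}$ is the set of all configurations, topologised as a subspace of $\mathbb R^{3n}$ via this injection. Let $E_3=\{(v,w_1,w_2,w_3)\in V^4:(v,w_i)\in E \text{ for } i=1,2,3,\ w_i\neq w_j \text{ for } i\neq j\}$. The orientation of $\varphi$ is $O_\varphi:E_3\to\{-1,0,1\}$, $O_\varphi(v,w_1,w_2,w_3)=\operatorname{sign}\big((\varphi(w_1)-\varphi(v))\cdot[(\varphi(w_2)-\varphi(v))\times(\varphi(w_3)-\varphi(v))]\big)$. A tuple in $E_3$ is planar if $O_\varphi$ vanishes on it for every (equivalently some) $\varphi\in\mathcal C_{\mathcal M}$, and $\mathcal M$ is planar if every tuple of $E_3$ is planar. *)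

(* Defs.v *)
From Stdlib Require Import Reals Lra ZArith.
Open Scope R_scope.

Record pt3 := P3 { px : R; py : R; pz : R }.

Definition vsub (a b : pt3) : pt3 := P3 (px a - px b) (py a - py b) (pz a - pz b).
Definition vdot (a b : pt3) : R := px a * px b + py a * py b + pz a * pz b.
Definition vcross (a b : pt3) : pt3 :=
  P3 (py a * pz b - pz a * py b) (pz a * px b - px a * pz b) (px a * py b - py a * px b).
Definition vnorm (a : pt3) : R := sqrt (vdot a a).
Definition vdist (a b : pt3) : R := vnorm (vsub a b).
Definition vlerp (a b : pt3) (t : R) : pt3 :=
  P3 ((1 - t) * px a + t * px b) ((1 - t) * py a + t * py b) ((1 - t) * pz a + t * pz b).
Definition vangle (a b : pt3) : R := acos (vdot a b / (vnorm a * vnorm b)).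

(* Molecular graph with vertex set V = {0, ..., n-1}. *)
Record molgraph := MolGraph {
  mg_n : nat;
  mg_E : nat -> nat -> Prop;
  mg_cV : nat -> nat;
  mg_L : nat -> nat -> R;
  mg_Th : nat -> nat -> nat -> R;
  mg_E_dom : forall v w, mg_E v w -> (v < mg_n)%nat /\ (w < mg_n)%nat;
  mg_E_irrefl : forall v, ~ mg_E v v;
  mg_E_sym : forall v w, mg_E v w <-> mg_E w v;
  mg_L_pos : forall v w, mg_E v w -> 0 < mg_L v w;
  mg_L_sym : forall v w, mg_E v w -> mg_L v w = mg_L w v;
  mg_Th_range : forall v w1 w2, mg_E v w1 -> mg_E v w2 -> w1 <> w2 ->
      0 < mg_Th v w1 w2 <= PI;
  mg_Th_sym : forall v w1 w2, mg_E v w1 -> mg_E v w2 -> w1 <> w2 ->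
      mg_Th v w1 w2 = mg_Th v w2 w1
}.

Definition inE2 (M : molgraph) (v w1 w2 : nat) : Prop :=
  mg_E M v w1 /\ mg_E M v w2 /\ w1 <> w2.

Definition inE3 (M : molgraph) (v w1 w2 w3 : nat) : Prop :=
  mg_E M v w1 /\ mg_E M v w2 /\ mg_E M v w3 /\
  w1 <> w2 /\ w1 <> w3 /\ w2 <> w3.

(* A configuration is given by the images phi v of the vertices v < n (values
   at other indices are irrelevant).  Points of the geometric realisation:
   a vertex, or an interior point of an edge (v,w) at parameter t in (0,1)
   (the point at distance t * L(v,w) from v).  The edge (v,w) at parameter t
   and the edge (w,v) at parameter 1-t are the same point. *)
Inductive rpoint :=
  | RVert (v : nat)
  | REdge (v w : nat) (t : R).

Definition rvalid (M : molgraph) (p : rpoint) : Prop :=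
  match p with
  | RVert v => (v < mg_n M)%nat
  | REdge v w t => mg_E M v w /\ 0 < t < 1
  end.

Definition rsame (p q : rpoint) : Prop :=
  match p, q with
  | RVert v, RVert v' => v = v'
  | REdge v w t, REdge v' w' t' =>
      (v = v' /\ w = w' /\ t = t') \/ (v = w' /\ w = v' /\ t = 1 - t')
  | _, _ => False
  end.

(* The map on the geometric realisation: on each edge it is the affine
   parametrisation of the segment [phi v, phi w], which is an isometric
   embedding of [0, L(v,w)] exactly when |phi v - phi w| = L(v,w). *)
Definition rimage (phi : nat -> pt3) (p : rpoint) : pt3 :=
  match p with
  | RVert v => phi v
  | REdge v w t => vlerp (phi v) (phi w) t
  end.

Definition is_config (M : molgraph) (phi : nat -> pt3) : Prop :=
  (forall v w, mg_E M v w -> vdist (phi v) (phi w) = mg_L M v w) /\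
  (forall p q, rvalid M p -> rvalid M q ->
      rimage phi p = rimage phi q -> rsame p q) /\
  (forall v w1 w2, inE2 M v w1 w2 ->
      vangle (vsub (phi w1) (phi v)) (vsub (phi w2) (phi v)) = mg_Th M v w1 w2).

Definition Rsign (x : R) : Z :=
  match Rcase_abs x with
  | left _ => (-1)%Z
  | right _ => if Req_EM_T x 0 then 0%Z else 1%Z
  end.

Definition orient (phi : nat -> pt3) (v w1 w2 w3 : nat) : Z :=
  Rsign (vdot (vsub (phi w1) (phi v))
              (vcross (vsub (phi w2) (phi v)) (vsub (phi w3) (phi v)))).

(* Two configurations, identified by their vertex tuples in R^{3n}. *)
Definition config_eq (M : molgraph) (phi psi : nat -> pt3) : Prop :=
  forall v, (v < mg_n M)%nat -> phi v = psi v.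

(* A path in C_M (subspace topology of R^{3n}, here with the equivalent
   max-over-vertices Euclidean metric) from phi to psi. *)
Definition config_path (M : molgraph) (phi psi : nat -> pt3) : Prop :=
  exists gamma : R -> nat -> pt3,
    config_eq M (gamma 0) phi /\ config_eq M (gamma 1) psi /\
    (forall t, 0 <= t <= 1 -> is_config M (gamma t)) /\
    (forall t0, 0 <= t0 <= 1 -> forall eps, 0 < eps -> exists delta, 0 < delta /\
       forall t, 0 <= t <= 1 -> Rabs (t - t0) < delta ->
         forall v, (v < mg_n M)%nat -> vdist (gamma t v) (gamma t0 v) < eps).

Definition path_connected_C (M : molgraph) : Prop :=
  forall phi psi, is_config M phi -> is_config M psi -> config_path M phi psi.

Definition planar_tuple (M : molgraph) (v w1 w2 w3 : nat) : Prop :=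
  forall phi, is_config M phi -> orient phi v w1 w2 w3 = 0%Z.

Definition planar (M : molgraph) : Prop :=
  forall v w1 w2 w3, inE3 M v w1 w2 w3 -> planar_tuple M v w1 w2 w3.

(* Main.v *)
Require Import Defs.
From Stdlib Require Import Reals ZArith Lra Psatz Classical.
Open Scope R_scope.

Definition trip (a b c : pt3) : R := vdot a (vcross b c).

Lemma trip_gram a b c :
  (trip a b c)^2 =
  vdot a a * (vdot b b * vdot c c - vdot b c * vdot b c)
  - vdot a b * (vdot a b * vdot c c - vdot b c * vdot a c)
  + vdot a c * (vdot a b * vdot b c - vdot b b * vdot a c).
Proof. destruct a, b, c; unfold trip, vdot, vcross; simpl; ring. Qed.

Lemma vdot_self_ge0 a : 0 <= vdot a a.
Proof. destruct a; unfold vdot; simpl; nra. Qed.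

Lemma vnorm_sq a : vdot a a = (vnorm a)^2.
Proof. unfold vnorm. rewrite <- Rsqr_pow2, Rsqr_sqrt; auto using vdot_self_ge0. Qed.

Lemma cauchy a b : (vdot a b)^2 <= vdot a a * vdot b b.
Proof. destruct a as [x1 y1 z1], b as [x2 y2 z2]; unfold vdot; simpl.
  pose proof (Rle_0_sqr (x1*y2 - y1*x2)); pose proof (Rle_0_sqr (x1*z2 - z1*x2));
  pose proof (Rle_0_sqr (y1*z2 - z1*y2)); unfold Rsqr in *; nra.
Qed.

Lemma vnorm_ge0 a : 0 <= vnorm a.
Proof. unfold vnorm; apply sqrt_pos. Qed.

Lemma dot_angle a b : 0 < vnorm a -> 0 < vnorm b ->
  vdot a b = cos (vangle a b) * vnorm a * vnorm b.
Proof.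
  intros Ha Hb. unfold vangle. rewrite cos_acos.
  - field; lra.
  - pose proof (cauchy a b) as C. rewrite !vnorm_sq in C.
    assert (Hn : 0 < vnorm a * vnorm b) by nra.
    assert (Habs : - (vnorm a * vnorm b) <= vdot a b <= vnorm a * vnorm b).
    { split; nra. }
    split.
    + apply (Rmult_le_reg_r (vnorm a * vnorm b)); auto.
      unfold Rdiv; rewrite Rmult_assoc, Rinv_l by lra; lra.
    + apply (Rmult_le_reg_r (vnorm a * vnorm b)); auto.
      unfold Rdiv; rewrite Rmult_assoc, Rinv_l by lra; lra.
Qed.

Lemma vnorm_sub_sym a b : vnorm (vsub a b) = vnorm (vsub b a).
Proof. unfold vnorm; f_equal; destruct a, b; unfold vdot, vsub; simpl; ring. Qed.

Definition Kconst (M : molgraph) v w1 w2 w3 : R :=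
  let L1 := mg_L M v w1 in let L2 := mg_L M v w2 in let L3 := mg_L M v w3 in
  let d12 := cos (mg_Th M v w1 w2) * L1 * L2 in
  let d13 := cos (mg_Th M v w1 w3) * L1 * L3 in
  let d23 := cos (mg_Th M v w2 w3) * L2 * L3 in
  L1^2 * (L2^2 * L3^2 - d23 * d23) - d12 * (d12 * L3^2 - d23 * d13)
  + d13 * (d12 * d23 - L2^2 * d13).

Definition T (phi : nat -> pt3) v w1 w2 w3 :=
  trip (vsub (phi w1) (phi v)) (vsub (phi w2) (phi v)) (vsub (phi w3) (phi v)).

Lemma T_sq M phi v w1 w2 w3 : is_config M phi -> inE3 M v w1 w2 w3 ->
  (T phi v w1 w2 w3)^2 = Kconst M v w1 w2 w3.
Proof.
  intros [Hd [_ Ha]] (E1 & E2 & E3 & n12 & n13 & n23).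
  assert (N : forall w, mg_E M v w -> vnorm (vsub (phi w) (phi v)) = mg_L M v w).
  { intros w Ew. rewrite vnorm_sub_sym. apply Hd; auto. }
  assert (P : forall w, mg_E M v w -> 0 < vnorm (vsub (phi w) (phi v))).
  { intros w Ew. rewrite N by auto. apply mg_L_pos; auto. }
  assert (D : forall w w', mg_E M v w -> mg_E M v w' -> w <> w' ->
     vdot (vsub (phi w) (phi v)) (vsub (phi w') (phi v)) =
     cos (mg_Th M v w w') * mg_L M v w * mg_L M v w').
  { intros w w' Ew Ew' nw. rewrite dot_angle by auto.
    rewrite Ha by (repeat split; auto). rewrite !N by auto. reflexivity. }
  unfold T. rewrite trip_gram, !vnorm_sq, !N by auto.
  rewrite !D by auto. unfold Kconst. reflexivity.
Qed.

Lemma Rsign_opp_mul x y : Rsign x = (- Rsign y)%Z -> Rsign x <> 0%Z -> x * y < 0.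
Proof.
  unfold Rsign. destruct (Rcase_abs x), (Rcase_abs y);
  try destruct (Req_EM_T x 0); try destruct (Req_EM_T y 0); intros H1 H2;
  try discriminate; try (exfalso; apply H2; reflexivity); try nra.
Qed.

Definition clamp t := Rmin 1 (Rmax 0 t).

Lemma clamp_range t : 0 <= clamp t <= 1.
Proof. unfold clamp, Rmin, Rmax; repeat destruct Rle_dec; lra. Qed.

Lemma clamp_lip t s : Rabs (clamp t - clamp s) <= Rabs (t - s).
Proof. unfold clamp, Rmin, Rmax; repeat destruct Rle_dec; unfold Rabs;
  repeat destruct Rcase_abs; lra. Qed.

Lemma clamp_id t : 0 <= t <= 1 -> clamp t = t.
Proof. unfold clamp, Rmin, Rmax; repeat destruct Rle_dec; lra. Qed.

Lemma coord_le a b : Rabs (px a - px b) <= vdist a b /\ Rabs (py a - py b) <= vdist a b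
  /\ Rabs (pz a - pz b) <= vdist a b.
Proof.
  unfold vdist, vnorm, vdot, vsub; simpl.
  repeat split; rewrite <- sqrt_Rsqr_abs; apply sqrt_le_1_alt; unfold Rsqr;
  match goal with |- _ <= ?a*?a + ?b*?b + ?c*?c =>
    pose proof (Rle_0_sqr a); pose proof (Rle_0_sqr b); pose proof (Rle_0_sqr c) end;
  unfold Rsqr in *; lra.
Qed.

Lemma coord_cont (M : molgraph) (gamma : R -> nat -> pt3) v (f : pt3 -> R) :
  (forall a b, Rabs (f a - f b) <= vdist a b) ->
  (v < mg_n M)%nat ->
  (forall t0, 0 <= t0 <= 1 -> forall eps, 0 < eps -> exists delta, 0 < delta /\
       forall t, 0 <= t <= 1 -> Rabs (t - t0) < delta ->
         forall v, (v < mg_n M)%nat -> vdist (gamma t v) (gamma t0 v) < eps) ->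
  continuity (fun t => f (gamma (clamp t) v)).
Proof.
  intros Hf Hv Hc a. unfold continuity_pt, continue_in, limit1_in, limit_in.
  intros eps He. destruct (Hc (clamp a) (clamp_range a) eps He) as [d [Hd Hd']].
  exists d; split; auto. intros x [_ Hx]. simpl in *. unfold R_dist in *.
  eapply Rle_lt_trans; [apply Hf|]. apply Hd'; auto using clamp_range.
  eapply Rle_lt_trans; [apply clamp_lip| exact Hx].
Qed.

Lemma part1 (M : molgraph) (phi psi : nat -> pt3) (v w1 w2 w3 : nat) :
     is_config M phi -> is_config M psi -> inE3 M v w1 w2 w3 ->
     orient phi v w1 w2 w3 = (- orient psi v w1 w2 w3)%Z ->
     orient phi v w1 w2 w3 <> 0%Z ->
     ~ config_path M phi psi.
Proof.
  intros Cphi Cpsi H3 Ho Hnz [gamma [G0 [G1 [Gc Gcont]]]].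
  pose proof (Rsign_opp_mul _ _ Ho Hnz) as Hneg.
  fold (T phi v w1 w2 w3) (T psi v w1 w2 w3) in Hneg.
  destruct H3 as (E1 & E2 & E3 & n12 & n13 & n23).
  destruct (mg_E_dom M v w1 E1) as [Hv Hw1].
  destruct (mg_E_dom M v w2 E2) as [_ Hw2].
  destruct (mg_E_dom M v w3 E3) as [_ Hw3].
  set (F := fun t => T (gamma (clamp t)) v w1 w2 w3).
  assert (CF : continuity F).
  { unfold F, T, trip, vdot, vcross, vsub; simpl.
    assert (cc : forall w, (w < mg_n M)%nat ->
      continuity (fun t => px (gamma (clamp t) w)) /\
      continuity (fun t => py (gamma (clamp t) w)) /\
      continuity (fun t => pz (gamma (clamp t) w))).
    { intros w Hw; repeat split; eapply coord_cont; eauto; intros; apply coord_le. }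
    destruct (cc v Hv) as (a1 & a2 & a3).
    destruct (cc w1 Hw1) as (b1 & b2 & b3).
    destruct (cc w2 Hw2) as (c1 & c2 & c3).
    destruct (cc w3 Hw3) as (d1 & d2 & d3).
    repeat first [apply continuity_plus | apply continuity_minus | apply continuity_mult | apply continuity_opp];
    assumption. }
  assert (F0 : F 0 = T phi v w1 w2 w3).
  { unfold F. rewrite clamp_id by lra. unfold T. rewrite !G0; auto. }
  assert (F1 : F 1 = T psi v w1 w2 w3).
  { unfold F. rewrite clamp_id by lra. unfold T. rewrite !G1; auto. }
  assert (Hp : F 0 * F 1 <= 0) by (rewrite F0, F1; unfold T, trip; lra).
  destruct (IVT_cor F 0 1 CF ltac:(lra) Hp) as [z [Hz Fz]].
  unfold F in Fz.
  pose proof (T_sq M _ v w1 w2 w3 (Gc _ (clamp_range z))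
    ltac:(repeat split; auto)) as K1.
  pose proof (T_sq M _ v w1 w2 w3 Cphi ltac:(repeat split; auto)) as K2.
  rewrite Fz in K1. assert (T phi v w1 w2 w3 ^ 2 = 0) by lra.
  unfold T, trip in H; nra.
Qed.

Definition mir (p : pt3) := P3 (- px p) (py p) (pz p).

Lemma mir_sub a b : vsub (mir a) (mir b) = mir (vsub a b).
Proof. destruct a, b; unfold mir, vsub; simpl; f_equal; ring. Qed.
Lemma mir_dot a b : vdot (mir a) (mir b) = vdot a b.
Proof. destruct a, b; unfold mir, vdot; simpl; ring. Qed.
Lemma mir_lerp a b t : vlerp (mir a) (mir b) t = mir (vlerp a b t).
Proof. destruct a, b; unfold mir, vlerp; simpl; f_equal; ring. Qed.
Lemma mir_inj a b : mir a = mir b -> a = b.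
Proof. destruct a, b; unfold mir; simpl; intros H; injection H; intros;
  f_equal; lra. Qed.
Lemma mir_trip a b c : trip (mir a) (mir b) (mir c) = - trip a b c.
Proof. destruct a, b, c; unfold mir, trip, vdot, vcross; simpl; ring. Qed.

Lemma Rsign_opp x : Rsign (- x) = (- Rsign x)%Z.
Proof.
  unfold Rsign. destruct (Rcase_abs x), (Rcase_abs (-x));
  try destruct (Req_EM_T x 0); try destruct (Req_EM_T (-x) 0);
  try reflexivity; try lra.
Qed.

Lemma mir_config M phi : is_config M phi -> is_config M (fun v => mir (phi v)).
Proof.
  intros [Hd [Hi Ha]]. split; [|split].
  - intros v w E. unfold vdist, vnorm. rewrite mir_sub, mir_dot. apply Hd; auto.
  - intros p q Vp Vq Heq. apply Hi; auto.
    destruct p, q; simpl in *; rewrite ?mir_lerp in Heq; apply mir_inj; auto.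
  - intros v w1 w2 H. unfold vangle, vnorm. rewrite !mir_sub, !mir_dot.
    apply Ha; auto.
Qed.

Theorem mainTheorem1 (M : molgraph) :
  (forall (phi psi : nat -> pt3) (v w1 w2 w3 : nat),
     is_config M phi -> is_config M psi -> inE3 M v w1 w2 w3 ->
     orient phi v w1 w2 w3 = (- orient psi v w1 w2 w3)%Z ->
     orient phi v w1 w2 w3 <> 0%Z ->
     ~ config_path M phi psi) /\
  ((exists phi, is_config M phi) -> ~ planar M -> ~ path_connected_C M).
Proof.
  split; [exact (part1 M)|].
  intros _ Hnp Hpc. apply Hnp. intros v w1 w2 w3 H3 phi Cphi.
  destruct (Z.eq_dec (orient phi v w1 w2 w3) 0) as [e|ne]; auto.
  exfalso.
  pose proof (mir_config M phi Cphi) as Cm.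
  apply (part1 M phi (fun v => mir (phi v)) v w1 w2 w3 Cphi Cm H3); auto.
  - unfold orient. rewrite !mir_sub. fold (trip (mir (vsub (phi w1) (phi v)))
      (mir (vsub (phi w2) (phi v))) (mir (vsub (phi w3) (phi v)))).
    rewrite mir_trip, Rsign_opp, Z.opp_involutive. reflexivity.
Qed.
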